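(* Let $X$ be a (complete) doubling metric measure space, let $E\subset X$ be a closed set, and assume $\overline{\operatorname{co\,dim}}_A(E)<q$. Then there exists a constant $C>0$ such that \[\mathcal H^{\mu,q}_R\big(E\cap B(w,R)\big)\ge C\,R^{-q}\mu(B(w,R))\] for every $w\in E$ and all $0<R<\operatorname{diam}(E)$.
   Context: $(X,d,\mu)$ is a complete metric space with a Borel measure $\mu$ such that every closed ball $B(x,r)=\{y:d(x,y)\le r\}$, $r>0$, has $0<\mu(B(x,r))<\infty$, and $\mu$ is doubling. For $E\subset X$ and $r>0$, $E_r=\{x\in X:\operatorname{dist}(x,E)<r\}$. The upper Assouad codimension $\overline{\operatorname{co\,dim}}_A(E)$ is the infimum of all $s\ge0$ for which there is $c>0$ such that $\frac{\mu(E_r\cap B(x,R))}{\mu(B(x,R))}\ge c(r/R)^s$ for every $x\in E$ and all $0<r<R<\operatorname{diam}(E)$. For $q\ge0$ and $R>0$, the Hausdorff content of codimension $q$ is $\mathcal H_R^{\mu,q}(A)=\inf\{\sum_k\operatorname{rad}(B_k)^{-q}\mu(B_k): A\subset\bigcup_k B_k,\ \operatorname{rad}(B_k)\le R\}$, the infimum over countable covers by balls. *)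

(* Defs.v *)
From Stdlib Require Import Reals Lra.
Open Scope R_scope.

Section MMS.
Context {X : Type} (d : X -> X -> R).

Definition is_metric : Prop :=
  (forall x y, 0 <= d x y) /\ (forall x y, d x y = 0 <-> x = y) /\
  (forall x y, d x y = d y x) /\ (forall x y z, d x z <= d x y + d y z).

Definition complete_metric : Prop :=
  forall u : nat -> X,
    (forall eps, 0 < eps -> exists N, forall m n, (N <= m)%nat -> (N <= n)%nat ->
        d (u m) (u n) < eps) ->
    exists l, forall eps, 0 < eps -> exists N, forall n, (N <= n)%nat -> d (u n) l < eps.

Definition mm_ball (x : X) (r : R) : X -> Prop := fun y => d x y <= r.

Definition mm_open_set (U : X -> Prop) : Prop :=
  forall x, U x -> exists r, 0 < r /\ forall y, d x y < r -> U y.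

Definition mm_closed_set (E : X -> Prop) : Prop :=
  forall x, (forall r, 0 < r -> exists y, E y /\ d x y < r) -> E x.

Definition mm_bounded (A : X -> Prop) : Prop :=
  exists x0 r, forall y, A y -> d x0 y <= r.

Definition sigma_algebra (M : (X -> Prop) -> Prop) : Prop :=
  M (fun _ => True) /\
  (forall A, M A -> M (fun x => ~ A x)) /\
  (forall A : nat -> X -> Prop, (forall n, M (A n)) -> M (fun x => exists n, A n x)).

(* A Borel measure which is finite on balls, represented by its (real) values
   on mm_bounded measurable sets; M is a sigma-algebra containing the Borel sets. *)
Definition locally_finite_borel_measure (M : (X -> Prop) -> Prop)
  (mu : (X -> Prop) -> R) : Prop :=
  sigma_algebra M /\
  (forall U, mm_open_set U -> M U) /\
  mu (fun _ => False) = 0 /\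
  (forall A, M A -> mm_bounded A -> 0 <= mu A) /\
  (forall A : nat -> X -> Prop,
     (forall n, M (A n)) ->
     (forall m n x, m <> n -> A m x -> A n x -> False) ->
     mm_bounded (fun x => exists n, A n x) ->
     infinite_sum (fun n => mu (A n)) (mu (fun x => exists n, A n x))).

Definition balls_positive (mu : (X -> Prop) -> R) : Prop :=
  forall x r, 0 < r -> 0 < mu (mm_ball x r).

Definition doubling (mu : (X -> Prop) -> R) : Prop :=
  exists Cd, forall x r, 0 < r -> mu (mm_ball x (2 * r)) <= Cd * mu (mm_ball x r).

(* R < diam(E)  (diam E = sup of d over E x E, possibly +infinity) *)
Definition lt_diam (R0 : R) (E : X -> Prop) : Prop :=
  exists x y, E x /\ E y /\ R0 < d x y.

Definition nbhd (E : X -> Prop) (r : R) : X -> Prop :=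
  fun x => exists y, E y /\ d x y < r.

Definition inter (A B : X -> Prop) : X -> Prop := fun x => A x /\ B x.

Definition assouad_codim_admissible (mu : (X -> Prop) -> R) (E : X -> Prop) (s : R) : Prop :=
  0 <= s /\
  exists c, 0 < c /\
    forall x r R0, E x -> 0 < r -> r < R0 -> lt_diam R0 E ->
      mu (inter (nbhd E r) (mm_ball x R0)) / mu (mm_ball x R0) >= c * Rpower (r / R0) s.

(* upper Assouad codimension of E (an infimum) is < q *)
Definition upper_assouad_codim_lt (mu : (X -> Prop) -> R) (E : X -> Prop) (q : R) : Prop :=
  exists s, assouad_codim_admissible mu E s /\ s < q.

(* Countable covers by balls: a sequence of (center, radius) pairs, where
   None stands for "no mm_ball" (so finite covers are included). *)
Definition cover_term (mu : (X -> Prop) -> R) (q : R) (b : option (X * R)) : R :=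
  match b with
  | None => 0
  | Some (c, r) => Rpower r (- q) * mu (mm_ball c r)
  end.

(* H^{mu,q}_R(A) >= V, i.e. every admissible cover has sum >= V
   (a divergent sum of nonnegative terms counts as +infinity >= V). *)
Definition hcontent_ge (mu : (X -> Prop) -> R) (q R0 : R) (A : X -> Prop) (V : R) : Prop :=
  forall cov : nat -> option (X * R),
    (forall k c r, cov k = Some (c, r) -> 0 < r /\ r <= R0) ->
    (forall y, A y -> exists k c r, cov k = Some (c, r) /\ d c y <= r) ->
    forall l, infinite_sum (fun k => cover_term mu q (cov k)) l -> V <= l.

End MMS.

(* Main.v *)
Require Import Defs.
From Stdlib Require Import Reals Lra Lia Classical ClassicalEpsilon FunctionalExtensionality PropExtensionality.
Open Scope R_scope.

Lemma set_ext {X : Type} (A B : X -> Prop) : (forall x, A x <-> B x) -> A = B.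
Proof. intros H; apply functional_extensionality; intros x; apply propositional_extensionality; auto. Qed.

Fixpoint psum (f : nat -> R) (n : nat) : R :=
  match n with O => 0 | S n' => psum f n' + f n' end.

Lemma psum_sum_f (f : nat -> R) n : psum f (S n) = sum_f_R0 f n.
Proof. induction n; simpl in *; [lra|]. rewrite <- IHn. simpl. lra. Qed.

Lemma psum_nonneg f n : (forall k, 0 <= f k) -> 0 <= psum f n.
Proof. intros H; induction n; simpl; [lra|]. specialize (H n); lra. Qed.

Lemma psum_mono_n f n m : (forall k, 0 <= f k) -> (n <= m)%nat -> psum f n <= psum f m.
Proof. intros H Hnm; induction Hnm; simpl; [lra|]. specialize (H m); lra. Qed.

Lemma psum_le f g n : (forall k, f k <= g k) -> psum f n <= psum g n.
Proof. intros H; induction n; simpl; [lra|]. specialize (H n); lra. Qed.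

Lemma psum_ext f g n : (forall k, (k < n)%nat -> f k = g k) -> psum f n = psum g n.
Proof. intros H; induction n; simpl; [lra|]. rewrite IHn by (intros; apply H; lia). rewrite H by lia. lra. Qed.

Lemma psum_le_lt f g n : (forall k, (k < n)%nat -> f k <= g k) -> psum f n <= psum g n.
Proof. intros H; induction n; simpl; [lra|]. assert (A:=IHn ltac:(intros; apply H; lia)). assert (B := H n ltac:(lia)). lra. Qed.

Lemma psum_plus f g n : psum (fun k => f k + g k) n = psum f n + psum g n.
Proof. induction n; simpl; lra. Qed.

Lemma psum_scal a f n : psum (fun k => a * f k) n = a * psum f n.
Proof. induction n; simpl; [lra|]. rewrite IHn; ring. Qed.

Lemma psum_const a n : psum (fun _ => a) n = INR n * a.
Proof. induction n; simpl psum; [simpl; lra|]. rewrite IHn, S_INR; ring. Qed.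

Lemma psum_zero f n : (forall k, (k < n)%nat -> f k = 0) -> psum f n = 0.
Proof. intros H; rewrite (psum_ext f (fun _ => 0)) by auto. rewrite psum_const; lra. Qed.

Lemma psum_swap (f : nat -> nat -> R) n m :
  psum (fun i => psum (fun k => f i k) m) n = psum (fun k => psum (fun i => f i k) n) m.
Proof.
  induction n; simpl.
  - rewrite psum_zero; auto.
  - rewrite IHn. rewrite <- psum_plus. reflexivity.
Qed.

Lemma psum_le_lim f l n : (forall k, 0 <= f k) -> infinite_sum f l -> psum f n <= l.
Proof.
  intros Hpos Hl.
  destruct (Rle_or_lt (psum f n) l) as [H|H]; auto.
  exfalso. destruct (Hl (psum f n - l)) as [N HN]; [lra|].
  specialize (HN (max n N) ltac:(lia)). unfold Rdist in HN.
  rewrite <- psum_sum_f in HN.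
  assert (psum f n <= psum f (S (max n N))) by (apply psum_mono_n; auto; lia).
  apply Rabs_def2 in HN. lra.
Qed.

Lemma lim_le_bound f l Sb : infinite_sum f l -> (forall n, psum f n <= Sb) -> l <= Sb.
Proof.
  intros Hl HS. destruct (Rle_or_lt l Sb) as [H|H]; auto.
  exfalso. destruct (Hl (l - Sb)) as [N HN]; [lra|].
  specialize (HN N ltac:(lia)). unfold Rdist in HN. rewrite <- psum_sum_f in HN.
  specialize (HS (S N)). apply Rabs_def2 in HN. lra.
Qed.

Lemma infinite_sum_eventually f m : (forall k, (m <= k)%nat -> f k = 0) -> infinite_sum f (psum f m).
Proof.
  intros H eps Heps. exists m. intros n Hn. unfold Rdist. rewrite <- psum_sum_f.
  assert (forall k, psum f (m + k) = psum f m) as Hk.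
  { induction k. - rewrite Nat.add_0_r; auto.
    - replace (m + S k)%nat with (S (m + k)) by lia. simpl. rewrite H by lia. lra. }
  assert (psum f (S n) = psum f m) as H0.
  { replace (S n) with (m + (S n - m))%nat by lia. apply Hk. }
  rewrite H0. unfold Rminus. rewrite Rplus_opp_r, Rabs_R0. auto.
Qed.


Section Meas.
Context {X : Type} (d : X -> X -> R) (M : (X -> Prop) -> Prop) (mu : (X -> Prop) -> R)
  (Hmet : is_metric d) (Hmu : locally_finite_borel_measure d M mu).

Lemma bnd_sub (A B : X -> Prop) : (forall x, A x -> B x) -> mm_bounded d B -> mm_bounded d A.
Proof. intros H [x0 [r Hr]]; exists x0, r; auto. Qed.

Lemma M_compl A : M A -> M (fun x => ~ A x).
Proof. destruct Hmu as [[_ [H _]] _]; auto. Qed.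
Lemma M_cunion (A : nat -> X -> Prop) : (forall n, M (A n)) -> M (fun x => exists n, A n x).
Proof. destruct Hmu as [[_ [_ H]] _]; auto. Qed.
Lemma M_full : M (fun _ => True).
Proof. destruct Hmu as [[H _] _]; auto. Qed.
Lemma M_empty : M (fun _ => False).
Proof. replace (fun _ : X => False) with (fun x : X => ~ True) by (apply set_ext; tauto).
  apply M_compl, M_full. Qed.

Lemma M_union2 A B : M A -> M B -> M (fun x => A x \/ B x).
Proof.
  intros HA HB.
  replace (fun x => A x \/ B x) with (fun x => exists n, (match n with O => A | _ => B end) x).
  - apply M_cunion. intros [|n]; auto.
  - apply set_ext; intros x; split.
    + intros [[|n] H]; auto.
    + intros [H|H]; [exists O | exists 1%nat]; auto.
Qed.

Lemma M_inter A B : M A -> M B -> M (fun x => A x /\ B x).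
Proof.
  intros HA HB.
  replace (fun x => A x /\ B x) with (fun x => ~ ((fun y => ~ A y) x \/ (fun y => ~ B y) x)).
  - apply M_compl, M_union2; apply M_compl; auto.
  - apply set_ext; intros x; tauto.
Qed.

Lemma M_ext A B : (forall x, A x <-> B x) -> M A -> M B.
Proof. intros H HA. rewrite <- (set_ext A B H). auto. Qed.

Lemma M_open U : mm_open_set d U -> M U.
Proof. destruct Hmu as [_ [H _]]; auto. Qed.

Lemma M_ball x r : M (mm_ball d x r).
Proof.
  destruct Hmet as [Hd0 [Hd1 [Hsym Htri]]].
  apply (M_ext (fun y => ~ (fun z => r < d x z) y)).
  { intros y; unfold mm_ball; split; intros; lra. }
  apply M_compl, M_open. intros z Hz. exists (d x z - r). split; [lra|].
  intros y Hy. specialize (Htri x y z). rewrite (Hsym y z) in Htri. lra.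
Qed.

Lemma M_nbhd E r : M (nbhd d E r).
Proof.
  destruct Hmet as [Hd0 [Hd1 [Hsym Htri]]].
  apply M_open. intros z [y [Ey Hzy]]. exists (r - d z y). split; [lra|].
  intros u Hu. exists y. split; auto. specialize (Htri u z y). rewrite (Hsym u z) in Htri. lra.
Qed.

Lemma M_fin_union (B : nat -> X -> Prop) m : (forall i, M (B i)) ->
  M (fun x => exists i, (i < m)%nat /\ B i x).
Proof.
  intros HB. apply M_cunion. intros i. destruct (Compare_dec.lt_dec i m) as [Hi|Hi].
  - apply (M_ext (B i)); [intros; tauto|auto].
  - apply (M_ext (fun _ => False)); [intros; tauto| apply M_empty].
Qed.

Lemma M_prop_and (P : Prop) A : M A -> M (fun x => P /\ A x).
Proof.
  intros HA. destruct (classic P) as [HP|HP].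
  - apply (M_ext A); [intros; tauto|auto].
  - apply (M_ext (fun _ => False)); [intros; tauto|apply M_empty].
Qed.

Lemma mu_empty : mu (fun _ => False) = 0.
Proof. destruct Hmu as [_ [_ [H _]]]; auto. Qed.

Lemma mu_nonneg A : M A -> mm_bounded d A -> 0 <= mu A.
Proof. destruct Hmu as [_ [_ [_ [H _]]]]; auto. Qed.

Lemma mu_ext A B : (forall x, A x <-> B x) -> mu A = mu B.
Proof. intros H; rewrite (set_ext A B H); auto. Qed.

Lemma mu_add2 A B : M A -> M B -> (forall x, A x -> B x -> False) ->
  mm_bounded d (fun x => A x \/ B x) -> mu (fun x => A x \/ B x) = mu A + mu B.
Proof.
  intros HA HB Hdis Hbd.
  destruct Hmu as [_ [_ [_ [_ Hadd]]]].
  set (F := fun n : nat => match n with O => A | 1%nat => B | _ => fun _ : X => False end).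
  assert (HU : (fun x => A x \/ B x) = (fun x => exists n, F n x)).
  { apply set_ext; intros x; split.
    - intros [H|H]; [exists O | exists 1%nat]; auto.
    - intros [[|[|n]] H]; simpl in H; tauto. }
  rewrite HU in *.
  assert (H1 := Hadd F ltac:(intros [|[|n]]; simpl; auto using M_empty)
     ltac:(intros [|[|m]] [|[|n]] x Hmn; simpl; try tauto; intros; eauto; lia) Hbd).
  assert (H2 : infinite_sum (fun n => mu (F n)) (psum (fun n => mu (F n)) 2)).
  { apply infinite_sum_eventually. intros [|[|k]] Hk; try lia. simpl. apply mu_empty. }
  rewrite (uniqueness_sum _ _ _ H1 H2). simpl. lra.
Qed.

Lemma mu_mono A B : M A -> M B -> mm_bounded d B -> (forall x, A x -> B x) -> mu A <= mu B.
Proof.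
  intros HA HB Hbd Hsub.
  assert (Heq : mu B = mu (fun x => A x \/ (fun y => B y /\ ~ A y) x)).
  { apply mu_ext; intros x; split; [tauto|]. intros [H|H]; auto; tauto. }
  rewrite Heq, mu_add2; auto.
  - assert (0 <= mu (fun y => B y /\ ~ A y)); [|lra].
    apply mu_nonneg. apply M_inter; auto using M_compl. apply (bnd_sub _ B); [tauto|auto].
  - apply M_inter; auto using M_compl.
  - tauto.
  - apply (bnd_sub _ B); auto. intros x [H|H]; [apply Hsub; auto|tauto].
Qed.

Lemma mu_sub2 A B : M A -> M B -> mm_bounded d (fun x => A x \/ B x) ->
  mu (fun x => A x \/ B x) <= mu A + mu B.
Proof.
  intros HA HB Hbd.
  assert (Heq : mu (fun x => A x \/ B x) = mu (fun x => A x \/ (fun y => B y /\ ~ A y) x)).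
  { apply mu_ext; intros x; tauto. }
  rewrite Heq, mu_add2; auto.
  - assert (mu (fun y => B y /\ ~ A y) <= mu B); [|lra].
    apply mu_mono; [apply M_inter; auto using M_compl | auto | apply (bnd_sub B (fun x => A x \/ B x)); auto | tauto].
  - apply M_inter; auto using M_compl.
  - tauto.
  - apply (bnd_sub _ (fun x => A x \/ B x)); auto. intros x [H|H]; tauto.
Qed.

Lemma mu_fin_sub (B : nat -> X -> Prop) m : (forall i, M (B i)) ->
  mm_bounded d (fun x => exists i, (i < m)%nat /\ B i x) ->
  mu (fun x => exists i, (i < m)%nat /\ B i x) <= psum (fun i => mu (B i)) m.
Proof.
  intros HB. induction m; intros Hbd.
  - simpl. rewrite (mu_ext _ (fun _ => False)), mu_empty; [lra|].
    intros x; split; [intros [i [Hi _]]; lia | tauto].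
  - simpl.
    rewrite (mu_ext _ (fun x => (fun y => exists i, (i < m)%nat /\ B i y) x \/ B m x)).
    2:{ intros x; split.
        - intros [i [Hi Hx]]. destruct (Nat.eq_dec i m); [subst; auto|left; exists i; split; auto; lia].
        - intros [[i [Hi Hx]]|Hx]; [exists i; split; auto; lia| exists m; split; auto]. }
    eapply Rle_trans; [apply mu_sub2|].
    + apply M_fin_union; auto.
    + auto.
    + eapply bnd_sub; [|exact Hbd]; intros x [[i [Hi Hx]]|Hx]; [exists i; split; [lia|exact Hx] | exists m; split; [lia|exact Hx]].
    + assert (mu (fun y => exists i, (i < m)%nat /\ B i y) <= psum (fun i => mu (B i)) m); [|lra].
      apply IHm. eapply bnd_sub; [|exact Hbd]; intros x [i [Hi Hx]]; exists i; split; [lia|exact Hx].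
Qed.

Lemma mu_fin_disj (B : nat -> X -> Prop) m : (forall i, M (B i)) ->
  (forall i j x, (i < m)%nat -> (j < m)%nat -> i <> j -> B i x -> B j x -> False) ->
  mm_bounded d (fun x => exists i, (i < m)%nat /\ B i x) ->
  mu (fun x => exists i, (i < m)%nat /\ B i x) = psum (fun i => mu (B i)) m.
Proof.
  intros HB. induction m; intros Hdis Hbd.
  - simpl. rewrite (mu_ext _ (fun _ => False)), mu_empty; [lra|].
    intros x; split; [intros [i [Hi _]]; lia | tauto].
  - simpl.
    rewrite (mu_ext _ (fun x => (fun y => exists i, (i < m)%nat /\ B i y) x \/ B m x)).
    2:{ intros x; split.
        - intros [i [Hi Hx]]. destruct (Nat.eq_dec i m); [subst; auto|left; exists i; split; auto; lia].
        - intros [[i [Hi Hx]]|Hx]; [exists i; split; auto; lia| exists m; split; auto]. }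
    rewrite mu_add2.
    + rewrite IHm; auto.
      * intros i j x Hi Hj; apply Hdis; lia.
      * eapply bnd_sub; [|exact Hbd]; intros x [i [Hi Hx]]; exists i; split; [lia|exact Hx].
    + apply M_fin_union; auto.
    + auto.
    + intros x [i [Hi Hx]] Hm. apply (Hdis i m x); auto; lia.
    + eapply bnd_sub; [|exact Hbd]; intros x [[i [Hi Hx]]|Hx]; [exists i; split; [lia|exact Hx] | exists m; split; [lia|exact Hx]].
Qed.

Lemma mu_cnt_sub (A : nat -> X -> Prop) Sb : (forall n, M (A n)) ->
  mm_bounded d (fun x => exists n, A n x) ->
  (forall N, psum (fun n => mu (A n)) N <= Sb) ->
  mu (fun x => exists n, A n x) <= Sb.
Proof.
  intros HA Hbd HS.
  destruct Hmu as [_ [_ [_ [_ Hadd]]]].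
  set (D := fun n x => A n x /\ ~ (exists i, (i < n)%nat /\ A i x)).
  assert (HD : forall n, M (D n)).
  { intros n. apply M_inter; auto. apply M_compl, M_fin_union; auto. }
  assert (HU : (fun x => exists n, A n x) = (fun x => exists n, D n x)).
  { apply set_ext; intros x; split.
    - intros [n Hn].
      assert (forall k, (k <= n)%nat -> A k x -> exists n, D n x) as Hk.
      { induction k as [k IH] using (well_founded_induction Wf_nat.lt_wf). intros Hk Ak.
        destruct (classic (exists i, (i < k)%nat /\ A i x)) as [[i [Hi Ai]]|Hno].
        - apply (IH i); auto; lia.
        - exists k; split; auto. }
      apply (Hk n); auto.
    - intros [n [Hn _]]; eauto. }
  rewrite HU in *.
  assert (Hs := Hadd D HD ltac:(intros m n x Hmn [Hm Hm'] [Hn Hn'];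
      destruct (Nat.lt_total m n) as [H|[H|H]]; [apply Hn'; eauto| auto | apply Hm'; eauto]) Hbd).
  apply (lim_le_bound _ _ _ Hs). intros N. eapply Rle_trans; [|apply (HS N)].
  apply psum_le. intros k. apply mu_mono; auto.
  - apply (bnd_sub _ (fun x => exists n, D n x)); auto.
    intros x Hx. assert (H: (fun x => exists n, A n x) x) by eauto. rewrite HU in H. exact H.
  - intros x [H _]; auto.
Qed.

End Meas.


Lemma psum_ge_lt f g n : (forall k, (k < n)%nat -> g k <= f k) -> psum g n <= psum f n.
Proof. apply psum_le_lt. Qed.

Lemma at_most_one (h : nat -> R) v m : 0 <= v ->
  (forall i, (i < m)%nat -> h i = 0 \/ h i = v) ->
  (forall i j, (i < m)%nat -> (j < m)%nat -> h i <> 0 -> h j <> 0 -> i = j) ->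
  psum h m <= v.
Proof.
  intros Hv. induction m; intros H01 Huniq; simpl; [lra|].
  destruct (Req_dec (h m) 0) as [Hz|Hnz].
  - rewrite Hz. assert (psum h m <= v); [|lra]. apply IHm; intros; [apply H01|apply Huniq]; auto; lia.
  - rewrite psum_zero.
    + destruct (H01 m ltac:(lia)); lra.
    + intros k Hk. destruct (Req_dec (h k) 0); auto. exfalso.
      assert (k = m) by (apply Huniq; auto; lia). lia.
Qed.

Lemma pigeon (m : nat) (g : nat -> nat -> R) (b : nat -> R) (P : nat -> R) Sb :
  (forall i N N', (N <= N')%nat -> g i N <= g i N') ->
  (forall N, psum (fun i => g i N) m <= P N) ->
  (forall N, P N <= Sb) ->
  Sb < psum b m ->
  exists i, (i < m)%nat /\ exists S', S' < b i /\ forall N, g i N <= S'.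
Proof.
  intros Hmono HgP HPS Hlt.
  apply NNPP; intros Hno.
  set (eta := (psum b m - Sb) / (INR m + 1)).
  assert (Hm1 : 0 < INR m + 1) by (pose proof (pos_INR m); lra).
  assert (Heta : 0 < eta) by (unfold eta; apply Rdiv_lt_0_compat; lra).
  assert (Hall : forall m', (m' <= m)%nat -> exists N, forall i, (i < m')%nat -> b i - eta < g i N).
  { induction m'; intros Hm'.
    - exists O; intros; lia.
    - destruct (IHm' ltac:(lia)) as [N HN].
      assert (exists N', b m' - eta < g m' N') as [N' HN'].
      { apply NNPP; intros Hn. apply Hno. exists m'; split; [lia|].
        exists (b m' - eta); split; [lra|]. intros N0. apply Rnot_lt_le. intros Hc; apply Hn; eauto. }
      exists (max N N'). intros i Hi.
      destruct (Nat.eq_dec i m') as [->|Hne].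
      + eapply Rlt_le_trans; [exact HN'|apply Hmono; lia].
      + eapply Rlt_le_trans; [apply HN; lia|apply Hmono; lia]. }
  destruct (Hall m (le_n m)) as [N HN].
  assert (H1 : psum (fun i => b i - eta) m <= psum (fun i => g i N) m)
    by (apply psum_le_lt; intros; left; apply HN; auto).
  assert (H2 : psum (fun i => b i - eta) m = psum b m - INR m * eta).
  { rewrite (psum_ext _ (fun i => b i + (-eta))) by (intros; ring).
    rewrite psum_plus, psum_const. ring. }
  assert (H3 : psum b m - INR m * eta > Sb).
  { unfold eta. apply (Rmult_lt_reg_r (INR m + 1)); auto.
    field_simplify; [|lra]. nra. }
  specialize (HgP N); specialize (HPS N). lra.
Qed.

Lemma max_nat (P : nat -> Prop) B : P O -> (forall m, P m -> (m <= B)%nat) ->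
  exists m, P m /\ forall m', P m' -> (m' <= m)%nat.
Proof.
  intros H0 HB.
  assert (forall k m, P m -> (B - m <= k)%nat -> exists m0, P m0 /\ forall m', P m' -> (m' <= m0)%nat).
  { induction k; intros m Pm Hk.
    - exists m; split; auto. intros m' Pm'. specialize (HB m' Pm'). lia.
    - destruct (classic (forall m', P m' -> (m' <= m)%nat)) as [Hy|Hn]; [eauto|].
      apply not_all_ex_not in Hn as [m' Hm']. apply imply_to_and in Hm' as [Pm' Hlt].
      apply (IHk m'); auto. specialize (HB m' Pm'). lia. }
  apply (H B O H0). lia.
Qed.


Section Dbl.
Context {X : Type} (d : X -> X -> R) (M : (X -> Prop) -> Prop) (mu : (X -> Prop) -> R)
  (Hmet : is_metric d) (Hmu : locally_finite_borel_measure d M mu)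
  (Hpos : balls_positive d mu) (D : R)
  (HD : forall x r, 0 < r -> mu (mm_ball d x (2 * r)) <= D * mu (mm_ball d x r)).


Definition Mb x r : M (mm_ball d x r) := M_ball d M mu Hmet Hmu x r.
Definition Mnb E r : M (nbhd d E r) := M_nbhd d M mu Hmet Hmu E r.
Definition Mfu := M_fin_union d M mu Hmu.
Definition Mint := M_inter d M mu Hmu.
Definition Mun := M_union2 d M mu Hmu.
Definition Mcu := M_cunion d M mu Hmu.
Definition Mem := M_empty d M mu Hmu.
Definition mon := mu_mono d M mu Hmu.
Definition nonneg := mu_nonneg d M mu Hmu.
Definition fdisj := mu_fin_disj d M mu Hmu.
Definition fsub := mu_fin_sub d M mu Hmu.
Definition csub := mu_cnt_sub d M mu Hmu.
Definition sub2 := mu_sub2 d M mu Hmu.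
Definition mempty := mu_empty d M mu Hmu.

Lemma ball_bnd x r : mm_bounded d (mm_ball d x r).
Proof. exists x, r; unfold mm_ball; auto. Qed.

Lemma mu_ball_nonneg x r : 0 <= mu (mm_ball d x r).
Proof. apply nonneg; auto using Mb, ball_bnd. Qed.

Lemma mu_ball_mono x r r' : r <= r' -> mu (mm_ball d x r) <= mu (mm_ball d x r').
Proof. intros H. apply mon; auto using Mb, ball_bnd. unfold mm_ball; intros; lra. Qed.

Lemma D_ge1 (x : X) : 1 <= D.
Proof.
  assert (H1 := Hpos x 1 Rlt_0_1). assert (H2 := HD x 1 Rlt_0_1).
  assert (H3 := mu_ball_mono x 1 (2 * 1) ltac:(lra)).
  destruct (Rle_or_lt 1 D); auto. nra.
Qed.

Lemma dbl_pow x r j : 0 < r -> mu (mm_ball d x (2 ^ j * r)) <= D ^ j * mu (mm_ball d x r).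
Proof.
  intros Hr. induction j; simpl.
  - rewrite !Rmult_1_l. lra.
  - assert (0 < 2 ^ j * r) by (apply Rmult_lt_0_compat; auto; apply pow_lt; lra).
    rewrite Rmult_assoc. eapply Rle_trans; [apply HD; auto|].
    assert (0 <= D) by (pose proof (mu_ball_nonneg x r); pose proof (Hpos x r Hr);
       pose proof (HD x r Hr); pose proof (mu_ball_nonneg x (2*r)); nra).
    rewrite Rmult_assoc. apply Rmult_le_compat_l; auto.
Qed.

Lemma dbl_le x r r' j : 0 < r -> r' <= 2 ^ j * r -> mu (mm_ball d x r') <= D ^ j * mu (mm_ball d x r).
Proof. intros Hr H. eapply Rle_trans; [apply mu_ball_mono, H|apply dbl_pow; auto]. Qed.

Lemma D_pos_pow (x : X) j : 0 < D ^ j.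
Proof. apply pow_lt. pose proof (D_ge1 x); lra. Qed.

Lemma max_family (F : X -> Prop) w R t j :
  0 < t -> t <= R / 4 -> R <= 2 ^ j * t ->
  (forall e, F e -> d w e <= R / 2) ->
  exists m (p : nat -> X),
    (forall i, (i < m)%nat -> F (p i)) /\
    (forall i i', (i < m)%nat -> (i' < m)%nat -> i <> i' -> 4 * t < d (p i) (p i')) /\
    (forall e, F e -> exists i, (i < m)%nat /\ d (p i) e <= 4 * t).
Proof.
  intros Ht HtR Hj HF.
  destruct Hmet as [Hd0 [Hd1 [Hsym Htri]]].
  set (valid := fun m => exists p : nat -> X, (forall i, (i < m)%nat -> F (p i)) /\
    (forall i i', (i < m)%nat -> (i' < m)%nat -> i <> i' -> 4 * t < d (p i) (p i'))).
  assert (Hbound : forall m, valid m -> INR m <= D ^ j).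
  { intros m [p [HpF Hsep]].
    assert (HmuW : 0 < mu (mm_ball d w R)) by (apply Hpos; lra).
    assert (Hlow : forall i, (i < m)%nat -> mu (mm_ball d w R) <= D ^ j * mu (mm_ball d (p i) (2 * t))).
    { intros i Hi. specialize (HF _ (HpF i Hi)).
      eapply Rle_trans; [|apply (dbl_le (p i) (2 * t) (2 * R) j); [lra|]].
      - apply mon; auto using Mb, ball_bnd. unfold mm_ball. intros y Hy.
        specialize (Htri (p i) w y). rewrite (Hsym (p i) w) in Htri. lra.
      - replace (2 ^ j * (2 * t)) with (2 * (2 ^ j * t)) by ring. lra. }
    assert (Hu : mu (fun x => exists i, (i < m)%nat /\ mm_ball d (p i) (2 * t) x) <= mu (mm_ball d w R)).
    { apply mon; auto using Mb, ball_bnd.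
      - apply Mfu; intros; apply Mb.
      - intros y [i [Hi Hy]]. specialize (HF _ (HpF i Hi)). unfold mm_ball in *.
        specialize (Htri w (p i) y). lra. }
    rewrite fdisj in Hu; cbv beta in Hu.
    3:{ intros i i' y Hi Hi' Hne Hy Hy'. specialize (Hsep i i' Hi Hi' Hne). unfold mm_ball in *.
        specialize (Htri (p i) y (p i')). rewrite (Hsym y (p i')) in Htri. lra. }
    3:{ apply (bnd_sub d _ (mm_ball d w R)); [|apply ball_bnd].
        intros y [i [Hi Hy]]. specialize (HF _ (HpF i Hi)). unfold mm_ball in *.
        specialize (Htri w (p i) y). lra. }
    2:{ intros; apply Mb. }
    assert (Hs : psum (fun _ => mu (mm_ball d w R) / D ^ j) m <= psum (fun i => mu (mm_ball d (p i) (2 * t))) m).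
    { apply psum_le_lt. intros i Hi. specialize (Hlow i Hi).
      pose proof (D_pos_pow w j).
      apply (Rmult_le_reg_l (D ^ j)); auto. field_simplify; lra. }
    rewrite psum_const in Hs.
    pose proof (D_pos_pow w j).
    assert (psum (fun i => mu (fun x => mm_ball d (p i) (2*t) x)) m = psum (fun i => mu (mm_ball d (p i) (2*t))) m) by reflexivity.
    assert (INR m * (mu (mm_ball d w R) / D ^ j) <= mu (mm_ball d w R)) by lra.
    apply (Rmult_le_reg_r (mu (mm_ball d w R) / D ^ j)).
    - apply Rdiv_lt_0_compat; auto.
    - replace (D ^ j * (mu (mm_ball d w R) / D ^ j)) with (mu (mm_ball d w R)) by (field; lra). lra. }
  destruct (INR_unbounded (D ^ j)) as [B HB].
  destruct (max_nat valid B) as [m [[p [HpF Hsep]] Hmax]].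
  - exists (fun _ => w). split; intros; lia.
  - intros m Hm. apply Hbound in Hm. apply INR_le. lra.
  - exists m, p. split; [auto|split; [auto|]].
    intros e Fe. apply NNPP; intros Hno.
    assert (valid (S m)).
    { exists (fun i => if Nat.eq_dec i m then e else p i). split.
      - intros i Hi. destruct (Nat.eq_dec i m); auto. apply HpF; lia.
      - intros i i' Hi Hi' Hne.
        destruct (Nat.eq_dec i m); destruct (Nat.eq_dec i' m); subst; try lia.
        + apply Rnot_le_lt. intros Hc. apply Hno. exists i'. split; [lia|]. rewrite Hsym; auto.
        + apply Rnot_le_lt. intros Hc. apply Hno. exists i. split; [lia|]. auto.
        + apply Hsep; lia. }
    apply Hmax in H. lia.
Qed.

End Dbl.


Lemma INR_le_pow2 n : INR n <= 2 ^ n.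
Proof. induction n; [simpl; lra|]. rewrite S_INR. simpl. assert (1 <= 2 ^ n) by (apply pow_R1_Rle; lra). lra. Qed.

Lemma Rpower_pos' x y : 0 < Rpower x y.
Proof. unfold Rpower; apply exp_pos. Qed.

Lemma exp_le' a b : a <= b -> exp a <= exp b.
Proof. intros [H|H]; [left; apply exp_increasing; auto| subst; lra]. Qed.

Lemma ln_le' a b : 0 < a -> a <= b -> ln a <= ln b.
Proof. intros Ha [H|H]; [left; apply ln_increasing; auto| subst; lra]. Qed.

Lemma Rpower_base_mono x y s : 0 < x -> x <= y -> 0 <= s -> Rpower x s <= Rpower y s.
Proof. intros Hx Hxy Hs. unfold Rpower. apply exp_le'. apply Rmult_le_compat_l; auto. apply ln_le'; auto. Qed.

Lemma Rpower_ratio_ge1 r R0 q : 0 < r -> r <= R0 -> 0 <= q -> 1 <= Rpower R0 q * Rpower r (- q).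
Proof.
  intros Hr HrR Hq. unfold Rpower. rewrite <- exp_plus. rewrite <- exp_0. apply exp_le'.
  assert (ln r <= ln R0) by (apply ln_le'; auto). nra.
Qed.

Lemma Rpower_inv1 R0 q : Rpower R0 q * Rpower R0 (- q) = 1.
Proof. unfold Rpower. rewrite <- exp_plus. rewrite <- exp_0. f_equal. ring. Qed.

Lemma pow_le1' x k : 0 <= x -> x <= 1 -> x ^ k <= 1.
Proof. intros H0 H1. induction k; simpl; [lra|]. assert (0 <= x ^ k) by (apply pow_le; auto). nra. Qed.

Section Step.
Context {X : Type} (d : X -> X -> R) (M : (X -> Prop) -> Prop) (mu : (X -> Prop) -> R)
  (Hmet : is_metric d) (Hmu : locally_finite_borel_measure d M mu)
  (Hpos : balls_positive d mu) (D : R)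
  (HD : forall x r, 0 < r -> mu (mm_ball d x (2 * r)) <= D * mu (mm_ball d x r))
  (E : X -> Prop) (q s c δ : R) (cov : nat -> option (X * R))
  (Hs0 : 0 <= s) (Hsq : s < q) (Hc : 0 < c)
  (Has : forall x r R0, E x -> 0 < r -> r < R0 -> lt_diam d R0 E ->
      mu (inter (nbhd d E r) (mm_ball d x R0)) / mu (mm_ball d x R0) >= c * Rpower (r / R0) s)
  (Hδ0 : 0 < δ) (Hδ1 : δ <= 1 / 8)
  (Hkey : forall R0, 0 < R0 -> Rpower R0 (- q) <= Rpower (δ * R0) (- q) * (c * Rpower δ s / (2 * D ^ 5)))
  (Hcov : forall k c0 r, cov k = Some (c0, r) -> 0 < r).

Definition relb (x : X) (ρ : R) (b : option (X * R)) : Prop :=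
  match b with None => False | Some (c0, r) => exists y, d x y <= ρ /\ d c0 y <= r end.
Definition term k := cover_term d mu q (cov k).
Definition ind x ρ k := if excluded_middle_informative (relb x ρ (cov k)) then term k else 0.
Definition Cst := c * Rpower δ s / (2 * D ^ 4).
Definition bad x ρ := E x /\ 0 < ρ /\ lt_diam d ρ E /\
  (forall k c0 r, cov k = Some (c0, r) -> relb x ρ (Some (c0, r)) -> r <= ρ) /\
  exists Sb, Sb < Cst * Rpower ρ (- q) * mu (mm_ball d x ρ) /\ forall N, psum (ind x ρ) N <= Sb.

Lemma term_nonneg k : 0 <= term k.
Proof.
  unfold term, cover_term. destruct (cov k) as [[c0 r]|]; [|lra].
  apply Rmult_le_pos; [left; apply Rpower_pos'|apply (mu_ball_nonneg d M mu Hmet Hmu)].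
Qed.

Lemma ind_nonneg x ρ k : 0 <= ind x ρ k.
Proof. unfold ind. destruct (excluded_middle_informative _); [apply term_nonneg|lra]. Qed.

Lemma lt_diam_mono R1 R2 : R1 <= R2 -> lt_diam d R2 E -> lt_diam d R1 E.
Proof. intros H [x [y [Hx [Hy Hxy]]]]. exists x, y. repeat split; auto. lra. Qed.

Lemma step w R0 : bad w R0 -> exists w', d w w' <= R0 / 2 /\ bad w' (δ * R0).
Proof.
  intros [Ew [HR [Hdiam [Hrad [Sb [HSb HP]]]]]].
  pose proof Hmet as [Hd0 [Hd1 [Hsym Htri]]].
  set (t := δ * R0).
  assert (Ht : 0 < t) by (unfold t; nra).
  assert (HtR : t <= R0 / 8) by (unfold t; nra).
  assert (HD1 := D_ge1 d M mu Hmet Hmu Hpos D HD w).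
  set (free := fun e => forall k c0 r, cov k = Some (c0, r) -> relb w R0 (Some (c0, r)) -> t < r -> 2 * r < d c0 e).
  set (F := fun e => E e /\ d w e <= R0 / 2 /\ free e).
  destruct (INR_unbounded (R0 / t)) as [j Hj].
  assert (Hj' : R0 <= 2 ^ j * t).
  { pose proof (INR_le_pow2 j). apply (Rmult_le_reg_r (/ t)); [apply Rinv_0_lt_compat; auto|].
    replace (2 ^ j * t * / t) with (2 ^ j) by (field; lra). unfold Rdiv in Hj. lra. }
  destruct (max_family d M mu Hmet Hmu Hpos D HD F w R0 t j) as [m [p [HpF [Hsep Hcovr]]]];
    [auto|lra|auto|intros e [_ [He _]]; auto|].
  assert (Hfr : forall i k c0 r, (i < m)%nat -> cov k = Some (c0, r) -> relb (p i) t (Some (c0, r)) -> relb w R0 (Some (c0, r)) /\ r <= t).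
  { intros i k c0 r Hi Hk [z [Hz1 Hz2]]. destruct (HpF i Hi) as [_ [Hwp Hfree]].
    assert (Hrel : relb w R0 (Some (c0, r))).
    { exists z; split; auto. specialize (Htri w (p i) z). lra. }
    split; auto. apply Rnot_lt_le. intros Htr.
    specialize (Hfree k c0 r Hk Hrel Htr). specialize (Htri c0 z (p i)).
    rewrite (Hsym z (p i)) in Htri. lra. }
  pose proof (mu_ball_nonneg d M mu Hmet Hmu) as Hbn.
  assert (HAw : 0 < mu (mm_ball d w R0)) by (apply Hpos; auto).
  set (a := Rpower δ s).
  assert (Ha : 0 < a) by apply Rpower_pos'.
  set (Sig := psum (fun i => mu (mm_ball d (p i) t)) m).
  assert (HA : c * a / (2 * D ^ 5) * mu (mm_ball d w R0) < Sig).
  { set (G := inter (nbhd d E t) (mm_ball d w (R0 / 4))).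
    set (UL := fun y => exists i, (i < m)%nat /\ mm_ball d (p i) (5 * t) y).
    set (Ak := fun k y => match cov k with None => False
              | Some (c0, r) => (relb w R0 (Some (c0, r)) /\ t < r) /\ mm_ball d c0 (3 * r) y end).
    set (UA := fun y => exists k, Ak k y).
    assert (MUL : M UL) by (apply (Mfu d M mu Hmu); intros; apply (Mb d M mu Hmet Hmu)).
    assert (MAk : forall k, M (Ak k)).
    { intros k. unfold Ak. destruct (cov k) as [[c0 r]|].
      - apply (M_prop_and d M mu Hmu). apply (Mb d M mu Hmet Hmu).
      - apply (Mem d M mu Hmu). }
    assert (MUA : M UA) by (apply (Mcu d M mu Hmu); auto).
    assert (MG : M G) by (apply (Mint d M mu Hmu); [apply (Mnb d M mu Hmet Hmu)|apply (Mb d M mu Hmet Hmu)]).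
    assert (HB5 : forall y, (UL y \/ UA y) -> mm_ball d w (5 * R0) y).
    { intros y [[i [Hi Hy]]|[k Hk]]; unfold mm_ball in *.
      - destruct (HpF i Hi) as [_ [Hwp _]]. specialize (Htri w (p i) y). lra.
      - unfold Ak in Hk. destruct (cov k) as [[c0 r]|] eqn:Hck; [|contradiction].
        destruct Hk as [[[z [Hz1 Hz2]] Htr] Hy].
        specialize (Hrad k c0 r Hck (ex_intro _ z (conj Hz1 Hz2))).
        pose proof (Htri w z y). pose proof (Htri z c0 y). rewrite (Hsym z c0) in H0. lra. }
    assert (Hbnd : mm_bounded d (fun y => UL y \/ UA y)) by (eapply bnd_sub; [exact HB5|apply ball_bnd]).
    assert (HGsub : forall y, G y -> UL y \/ UA y).
    { intros y [[e [Ee Hye]] Hwy]. unfold mm_ball in Hwy.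
      assert (Hwe : d w e <= R0 / 2) by (specialize (Htri w y e); lra).
      destruct (classic (UA y)) as [HUA|HnUA]; [right; auto|left].
      assert (Hfe : free e).
      { intros k c0 r Hk Hrel Htr. apply Rnot_le_lt. intros Hle. apply HnUA. exists k.
        unfold Ak. rewrite Hk. split; [split; auto|]. unfold mm_ball.
        specialize (Htri c0 e y). rewrite (Hsym e y) in Htri. lra. }
      destruct (Hcovr e (conj Ee (conj Hwe Hfe))) as [i [Hi Hpe]].
      exists i; split; auto. unfold mm_ball. specialize (Htri (p i) e y). rewrite (Hsym e y) in Htri. lra. }
    assert (HG1 : mu G <= mu UL + mu UA).
    { eapply Rle_trans; [apply (mon d M mu Hmu G (fun y => UL y \/ UA y)); auto|].
      - apply (Mun d M mu Hmu); auto.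
      - apply (sub2 d M mu Hmu); auto. }
    assert (HUL : mu UL <= D ^ 3 * Sig).
    { eapply Rle_trans; [apply (fsub d M mu Hmu); [intros; apply (Mb d M mu Hmet Hmu)|]|].
      - eapply bnd_sub; [|exact Hbnd]. intros y Hy; left; exact Hy.
      - unfold Sig. rewrite <- psum_scal. apply psum_le. intros i.
        apply (dbl_le d M mu Hmet Hmu Hpos D HD); auto. simpl. lra. }
    assert (HUA : mu UA <= D ^ 2 * Rpower R0 q * Sb).
    { apply (csub d M mu Hmu); auto.
      - eapply bnd_sub; [|exact Hbnd]. intros y Hy; right; exact Hy.
      - intros N. eapply Rle_trans; [apply (psum_le _ (fun k => D ^ 2 * Rpower R0 q * ind w R0 k))|].
        + intros k. assert (Hind := ind_nonneg w R0 k).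
          assert (HDq : 0 <= D ^ 2 * Rpower R0 q) by (apply Rmult_le_pos; [apply pow_le; lra|left; apply Rpower_pos']).
          unfold Ak. destruct (cov k) as [[c0 r]|] eqn:Hck.
          * destruct (classic (relb w R0 (Some (c0, r)) /\ t < r)) as [[Hrel Htr]|Hn].
            -- rewrite (mu_ext mu _ (mm_ball d c0 (3 * r))) by (intros y; tauto).
               unfold ind, term. rewrite Hck. destruct (excluded_middle_informative _) as [_|Hn]; [|contradiction].
               change (cover_term d mu q (Some (c0, r))) with (Rpower r (-q) * mu (mm_ball d c0 r)). specialize (Hrad k c0 r Hck Hrel).
               assert (H1 := Rpower_ratio_ge1 r R0 q ltac:(lra) Hrad ltac:(lra)).
               eapply Rle_trans; [apply (dbl_le d M mu Hmet Hmu Hpos D HD c0 r (3 * r) 2); [lra|simpl; lra]|].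
               assert (H2 := Hbn c0 r). assert (H3 : 0 < D ^ 2) by (apply pow_lt; lra).
               replace (D ^ 2 * Rpower R0 q * (Rpower r (- q) * mu (mm_ball d c0 r)))
                 with (D ^ 2 * mu (mm_ball d c0 r) * (Rpower R0 q * Rpower r (- q))) by ring.
               assert (0 <= D ^ 2 * mu (mm_ball d c0 r)) by (apply Rmult_le_pos; lra). rewrite <- (Rmult_1_r (D ^ 2 * mu (mm_ball d c0 r))) at 1. apply Rmult_le_compat_l; auto.
            -- rewrite (mu_ext mu _ (fun _ => False)) by (intros y; tauto).
               rewrite (mempty d M mu Hmu). nra.
          * rewrite (mempty d M mu Hmu). nra.
        + rewrite psum_scal. apply Rmult_le_compat_l; auto.
          apply Rmult_le_pos; [apply pow_le; lra|left; apply Rpower_pos']. }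
    assert (HA4 : 0 < mu (mm_ball d w (R0 / 4))) by (apply Hpos; lra).
    assert (HG2 : c * Rpower (t / (R0 / 4)) s * mu (mm_ball d w (R0 / 4)) <= mu G).
    { assert (Hr := Has w t (R0 / 4) Ew Ht ltac:(lra) (lt_diam_mono (R0 / 4) R0 ltac:(lra) Hdiam)).
      fold G in Hr. apply Rge_le in Hr.
      apply (Rmult_le_compat_r (mu (mm_ball d w (R0 / 4)))) in Hr; [|lra].
      replace (mu G / mu (mm_ball d w (R0 / 4)) * mu (mm_ball d w (R0 / 4))) with (mu G) in Hr by (field; lra).
      exact Hr. }
    assert (Ha' : a <= Rpower (t / (R0 / 4)) s).
    { apply Rpower_base_mono; auto. unfold t. replace (δ * R0 / (R0 / 4)) with (4 * δ) by (field; lra). lra. }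
    assert (HAA : mu (mm_ball d w R0) <= D ^ 2 * mu (mm_ball d w (R0 / 4))).
    { apply (dbl_le d M mu Hmet Hmu Hpos D HD); [lra|simpl; lra]. }
    assert (HD2 : 0 < D ^ 2) by (apply pow_lt; lra).
    assert (HD3 : 0 < D ^ 3) by (apply pow_lt; lra).
    set (A := mu (mm_ball d w R0)) in *.
    set (A4 := mu (mm_ball d w (R0 / 4))) in *.
    set (Z := c * a * A / (2 * D ^ 2)).
    assert (S1 : D ^ 2 * Rpower R0 q * Sb < Z).
    { assert (HP0 : 0 < D ^ 2 * Rpower R0 q) by (apply Rmult_lt_0_compat; auto; apply Rpower_pos').
      apply (Rmult_lt_compat_l _ _ _ HP0) in HSb. eapply Rlt_le_trans; [exact HSb|].
      right. unfold Cst, Z. fold a.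
      replace (D ^ 2 * Rpower R0 q * (c * a / (2 * D ^ 4) * Rpower R0 (- q) * A))
        with (D ^ 2 * (c * a / (2 * D ^ 4)) * A * (Rpower R0 q * Rpower R0 (- q))) by ring.
      rewrite Rpower_inv1. field. lra. }
    assert (S2 : 2 * Z <= mu G).
    { eapply Rle_trans; [|exact HG2].
      assert (2 * Z = c * a * (A / D ^ 2)) by (unfold Z; field; lra). rewrite H.
      assert (A / D ^ 2 <= A4) by (apply (Rmult_le_reg_l (D ^ 2)); auto; field_simplify; lra).
      assert (0 < c * a) by nra.
      apply Rle_trans with (c * a * A4); [apply Rmult_le_compat_l; lra|].
      apply Rmult_le_compat_r; [lra|]. apply Rmult_le_compat_l; lra. }
    assert (S3 : Z < D ^ 3 * Sig) by lra.
    replace (c * a / (2 * D ^ 5) * A) with (Z / D ^ 3) by (unfold Z; field; lra).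
    apply (Rmult_lt_reg_l (D ^ 3)); auto. field_simplify; lra. }
  assert (Hmono : forall i N N', (N <= N')%nat -> psum (ind (p i) t) N <= psum (ind (p i) t) N').
  { intros; apply psum_mono_n; auto; intros; apply ind_nonneg. }
  assert (Hsum : forall N, psum (fun i => psum (ind (p i) t) N) m <= psum (ind w R0) N).
  { intros N. rewrite (psum_swap (fun i k => ind (p i) t k)). apply psum_le. intros k.
    destruct (classic (relb w R0 (cov k))) as [Hr|Hnr].
    - assert (Hik : ind w R0 k = term k) by (unfold ind; destruct (excluded_middle_informative _); tauto).
      rewrite Hik. apply at_most_one; [apply term_nonneg| |].
      + intros i Hi. unfold ind. destruct (excluded_middle_informative _); auto.
      + intros i i2 Hi Hi2 Hni Hnj. unfold ind in Hni, Hnj.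
        destruct (excluded_middle_informative _) as [Ri|]; [|lra].
        destruct (excluded_middle_informative _) as [Rj|]; [|lra].
        destruct (Nat.eq_dec i i2) as [|Hne]; auto. exfalso.
        destruct (cov k) as [[c0 r]|] eqn:Hck; [|contradiction].
        destruct (Hfr i k c0 r Hi Hck Ri) as [_ Hrt].
        destruct Ri as [z1 [Hz1 Hz1']]. destruct Rj as [z2 [Hz2 Hz2']].
        specialize (Hsep i i2 Hi Hi2 Hne).
        pose proof (Htri (p i) z1 (p i2)). pose proof (Htri z1 c0 (p i2)). pose proof (Htri c0 z2 (p i2)).
        rewrite (Hsym z1 c0) in *. rewrite (Hsym z2 (p i2)) in *. lra.
    - rewrite psum_zero; [apply ind_nonneg|]. intros i Hi. unfold ind.
      destruct (excluded_middle_informative _) as [Ri|]; auto. exfalso.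
      destruct (cov k) as [[c0 r]|] eqn:Hck; [|contradiction].
      apply Hnr. apply (Hfr i k c0 r Hi Hck Ri). }
  assert (HCst : 0 < Cst).
  { unfold Cst. apply Rdiv_lt_0_compat; [apply Rmult_lt_0_compat; auto; apply Rpower_pos'|]. assert (0 < D ^ 4) by (apply pow_lt; lra). lra. }
  assert (Hlt : Sb < psum (fun i => Cst * Rpower t (- q) * mu (mm_ball d (p i) t)) m).
  { rewrite psum_scal. fold Sig. eapply Rlt_le_trans; [exact HSb|].
    assert (HK := Hkey R0 HR). fold t in HK. fold a in HK.
    assert (Htq : 0 < Rpower t (- q)) by apply Rpower_pos'.
    rewrite !Rmult_assoc. apply Rmult_le_compat_l; [lra|].
    apply Rle_trans with (Rpower t (- q) * (c * a / (2 * D ^ 5)) * mu (mm_ball d w R0)).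
    - apply Rmult_le_compat_r; lra.
    - rewrite Rmult_assoc. apply Rmult_le_compat_l; lra. }
  destruct (pigeon m (fun i N => psum (ind (p i) t) N) (fun i => Cst * Rpower t (- q) * mu (mm_ball d (p i) t))
     (psum (ind w R0)) Sb Hmono Hsum HP Hlt) as [i [Hi [S' [HS' HN]]]].
  exists (p i). destruct (HpF i Hi) as [Ei [Hwi _]]. split; auto.
  split; [auto|split; [auto|split; [apply (lt_diam_mono t R0); auto; lra|split]]].
  - intros k c0 r Hk Hrel. exact (proj2 (Hfr i k c0 r Hi Hk Hrel)).
  - exists S'. split; auto.
Qed.

Lemma small_pow y : 0 < y -> exists N, forall n, (N <= n)%nat -> δ ^ n < y.
Proof.
  intros Hy. destruct (pow_lt_1_zero δ ltac:(rewrite Rabs_right; lra) y Hy) as [N HN].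
  exists N. intros n Hn. specialize (HN n Hn). rewrite Rabs_right in HN; auto.
  apply Rle_ge, pow_le; lra.
Qed.

Lemma no_bad w R0 (Hcomp : complete_metric d) (HE : mm_closed_set d E) :
  (forall y, mm_ball d w R0 y -> E y -> exists k c0 r, cov k = Some (c0, r) /\ d c0 y <= r) ->
  bad w R0 -> False.
Proof.
  intros Hcv Hb.
  pose proof Hmet as [Hd0 [Hd1 [Hsym Htri]]].
  assert (HR : 0 < R0) by (destruct Hb as [_ [H _]]; auto).
  set (f := fun n x => epsilon (inhabits w) (fun x' => d x x' <= δ ^ n * R0 / 2 /\ bad x' (δ ^ (S n) * R0))).
  set (u := fun n => nat_rect (fun _ => X) w (fun n x => f n x) n).
  assert (He : forall n x, bad x (δ ^ n * R0) -> exists x', d x x' <= δ ^ n * R0 / 2 /\ bad x' (δ ^ (S n) * R0)).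
  { intros n0 x Hx. destruct (step x _ Hx) as [x' [H1 H2]]. exists x'. split; auto.
    simpl. rewrite Rmult_assoc. auto. }
  assert (Hb' : forall n, bad (u n) (δ ^ n * R0)).
  { induction n.
    - simpl. rewrite Rmult_1_l. exact Hb.
    - pose proof (epsilon_spec (inhabits w) _ (He n (u n) IHn)) as [H1 H2]. exact H2. }
  assert (Hu : forall n, bad (u n) (δ ^ n * R0) /\ d (u n) (u (S n)) <= δ ^ n * R0 / 2).
  { intros n. split; auto.
    pose proof (epsilon_spec (inhabits w) _ (He n (u n) (Hb' n))) as [H1 H2]. exact H1. }
  assert (Hpn : forall n, 0 <= δ ^ n) by (intros; apply pow_le; lra).
  assert (Hcd : forall k n, d (u n) (u (n + k)%nat) <= δ ^ n * R0).
  { induction k; intros n.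
    - rewrite Nat.add_0_r. rewrite (proj2 (Hd1 _ _) eq_refl). specialize (Hpn n). nra.
    - replace (n + S k)%nat with (S n + k)%nat by lia.
      specialize (IHk (S n)). pose proof (proj2 (Hu n)). pose proof (Htri (u n) (u (S n)) (u (S n + k)%nat)).
      change (δ ^ S n) with (δ * δ ^ n) in IHk. specialize (Hpn n). assert (HP : 0 <= δ ^ n * R0) by nra.
      assert (δ * δ ^ n * R0 <= δ ^ n * R0 / 2).
      { rewrite Rmult_assoc. apply Rle_trans with (1/8 * (δ ^ n * R0)); [apply Rmult_le_compat_r; lra|lra]. }
      lra. }
  assert (Hcd2 : forall N m n, (N <= m)%nat -> (N <= n)%nat -> d (u m) (u n) <= δ ^ N * R0).
  { intros N m n Hm Hn.
    assert (Hmono : forall a, (N <= a)%nat -> δ ^ a <= δ ^ N).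
    { intros a Ha. replace a with (N + (a - N))%nat by lia. rewrite pow_add.
      assert (δ ^ (a - N) <= 1) by (apply pow_le1'; lra). specialize (Hpn N). nra. }
    destruct (Nat.le_ge_cases m n).
    - replace n with (m + (n - m))%nat by lia. eapply Rle_trans; [apply Hcd|].
      apply Rmult_le_compat_r; [lra|auto].
    - rewrite Hsym. replace m with (n + (m - n))%nat by lia. eapply Rle_trans; [apply Hcd|].
      apply Rmult_le_compat_r; [lra|auto]. }
  destruct (Hcomp u) as [l Hl].
  { intros eps Heps. destruct (small_pow (eps / R0)) as [N HN]; [apply Rdiv_lt_0_compat; auto|].
    exists N. intros m n Hm Hn. eapply Rle_lt_trans; [apply (Hcd2 N); auto|].
    specialize (HN N (le_n N)). apply (Rmult_lt_compat_r R0) in HN; auto.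
    replace (eps / R0 * R0) with eps in HN by (field; lra). lra. }
  assert (Hdl : forall n, d (u n) l <= δ ^ n * R0).
  { intros n. apply Rnot_lt_le. intros Hcc.
    destruct (Hl (d (u n) l - δ ^ n * R0)) as [N HN]; [lra|].
    specialize (HN (max n N) ltac:(lia)).
    pose proof (Htri (u n) (u (max n N)) l).
    pose proof (Hcd2 n n (max n N) (le_n n) ltac:(lia)). lra. }
  assert (El : E l).
  { apply HE. intros r Hr. destruct (Hl r Hr) as [N HN]. exists (u N). split.
    - destruct (proj1 (Hu N)) as [HE' _]; auto.
    - rewrite Hsym. apply HN; lia. }
  assert (Hwl : mm_ball d w R0 l).
  { unfold mm_ball. specialize (Hdl O). simpl in Hdl. rewrite Rmult_1_l in Hdl. exact Hdl. }
  destruct (Hcv l Hwl El) as [k [c0 [r [Hk Hcr]]]].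
  assert (Hr := Hcov k c0 r Hk).
  destruct (small_pow (r / R0)) as [N HN]; [apply Rdiv_lt_0_compat; auto|].
  specialize (HN N (le_n N)).
  destruct (proj1 (Hu N)) as [_ [_ [_ [Hrad _]]]].
  specialize (Hrad k c0 r Hk (ex_intro _ l (conj (Hdl N) Hcr))).
  apply (Rmult_lt_compat_r R0) in HN; auto.
  replace (r / R0 * R0) with r in HN by (field; lra). lra.
Qed.

End Step.


Theorem lemma5p1 (X : Type) (d : X -> X -> R)
  (M : (X -> Prop) -> Prop) (mu : (X -> Prop) -> R)
  (Hmet : is_metric d) (Hcomp : complete_metric d)
  (Hmu : locally_finite_borel_measure d M mu)
  (Hpos : balls_positive d mu) (Hdbl : doubling d mu)
  (E : X -> Prop) (HE : mm_closed_set d E) (q : R)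
  (Hq : upper_assouad_codim_lt d mu E q) :
  exists C, 0 < C /\
    forall w R0, E w -> 0 < R0 -> lt_diam d R0 E ->
      hcontent_ge d mu q R0 (inter (mm_ball d w R0) E)
        (C * Rpower R0 (- q) * mu (mm_ball d w R0)).
Proof.
  destruct Hq as [s [[Hs0 [c [Hc Has]]] Hsq]].
  destruct Hdbl as [D0 HD0].
  set (D := Rmax 1 D0).
  assert (HD1 : 1 <= D) by apply Rmax_l.
  assert (HD : forall x r, 0 < r -> mu (mm_ball d x (2 * r)) <= D * mu (mm_ball d x r)).
  { intros x r Hr. eapply Rle_trans; [apply HD0; auto|]. apply Rmult_le_compat_r.
    - apply (mu_ball_nonneg d M mu Hmet Hmu).
    - apply Rmax_r. }
  assert (HD5 : 0 < D ^ 5) by (apply pow_lt; lra).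
  set (K := Rmax (ln 8) (ln (2 * D ^ 5 / c) / (q - s))).
  set (δ := exp (- K)).
  assert (Hδ0 : 0 < δ) by apply exp_pos.
  assert (Hδ1 : δ <= 1 / 8).
  { unfold δ. rewrite exp_Ropp. assert (exp (ln 8) <= exp K) by (apply exp_le'; apply Rmax_l).
    rewrite exp_ln in H by lra. apply (Rmult_le_reg_l (8 * exp K)); [nra|]. field_simplify; lra. }
  assert (Hlnd : ln δ = - K) by (unfold δ; apply ln_exp).
  assert (HK2 : ln (2 * D ^ 5 / c) <= (q - s) * K).
  { assert (ln (2 * D ^ 5 / c) / (q - s) <= K) by apply Rmax_r.
    apply (Rmult_le_compat_l (q - s)) in H; [|lra].
    replace ((q - s) * (ln (2 * D ^ 5 / c) / (q - s))) with (ln (2 * D ^ 5 / c)) in H by (field; lra). lra. }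
  assert (Hkey : forall R0, 0 < R0 -> Rpower R0 (- q) <= Rpower (δ * R0) (- q) * (c * Rpower δ s / (2 * D ^ 5))).
  { intros R0 HR. rewrite <- Rpower_mult_distr by auto.
    assert (Hb : 1 <= Rpower δ (- q) * (c * Rpower δ s / (2 * D ^ 5))).
    { unfold Rpower. rewrite Hlnd.
      replace (exp (- q * - K) * (c * exp (s * - K) / (2 * D ^ 5)))
        with (exp ((q - s) * K) * (c / (2 * D ^ 5))).
      2:{ replace ((q - s) * K) with (- q * - K + s * - K) by ring. rewrite exp_plus. field. lra. }
      assert (exp (ln (2 * D ^ 5 / c)) <= exp ((q - s) * K)) by (apply exp_le'; auto).
      rewrite exp_ln in H by (apply Rdiv_lt_0_compat; lra).
      apply (Rmult_le_compat_r (c / (2 * D ^ 5))) in H; [|left; apply Rdiv_lt_0_compat; lra].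
      replace (2 * D ^ 5 / c * (c / (2 * D ^ 5))) with 1 in H by (field; lra). lra. }
    assert (0 < Rpower R0 (- q)) by apply Rpower_pos'.
    replace (Rpower δ (- q) * Rpower R0 (- q) * (c * Rpower δ s / (2 * D ^ 5)))
      with (Rpower R0 (- q) * (Rpower δ (- q) * (c * Rpower δ s / (2 * D ^ 5)))) by ring.
    nra. }
  exists (Cst D s c δ). split.
  { unfold Cst. apply Rdiv_lt_0_compat; [apply Rmult_lt_0_compat; auto; apply Rpower_pos'|].
    assert (0 < D ^ 4) by (apply pow_lt; lra). lra. }
  intros w R0 Ew HR Hdiam cov Hcov Hcv l Hl.
  apply Rnot_lt_le. intros Hlt.
  apply (no_bad d M mu Hmet Hmu Hpos D HD E q s c δ cov Hs0 Hsq Hc Has Hδ0 Hδ1 Hkey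
           (fun k c0 r H => proj1 (Hcov k c0 r H)) w R0 Hcomp HE).
  - intros y Hy Ey. apply Hcv. split; auto.
  - split; [auto|split; [auto|split; [auto|split]]].
    + intros k c0 r Hk _. exact (proj2 (Hcov k c0 r Hk)).
    + exists l. split; [exact Hlt|]. intros N.
      eapply Rle_trans; [|apply (psum_le_lim (term d mu q cov)); [intros k0; apply (term_nonneg d M mu Hmet Hmu)|exact Hl]].
      apply psum_le. intros k. unfold ind. destruct (excluded_middle_informative _); [lra|apply (term_nonneg d M mu Hmet Hmu)].
Qed.
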